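(* Let $n\ge 3$ with $n\equiv 1$ or $3 \pmod 6$, and let $S_n$ be a Steiner latin square of order $n$. Then $$t(S_n)\ \ge\ \frac{6^{\lceil (n-1)/6\rceil-1}\,\lfloor n/3\rfloor!}{\lceil (n-1)/6\rceil!\,\lceil (n-1)/6\rceil}.$$
   Context: A latin square of order $n$ is an $n\times n$ array with entries from $\{0,1,\dots,n-1\}$ in which each symbol occurs exactly once in each row and each column; it is identified with the set of ordered triples $(r,c,s)$ meaning symbol $s$ is in row $r$, column $c$. A transversal of a latin square is a set of $n$ entries containing exactly one entry from each row and each column and in which no symbol is repeated. $t(A)$ denotes the number of transversals of the latin square $A$. A Steiner triple system (STS) on an $n$-element set $X$ is a set of $3$-element subsets of $X$ such that every $2$-element subset of $X$ lies in exactly one of them. The Steiner latin square of an STS on $X=\{0,\dots,n-1\}$ is the latin square consisting of the triples $(a,a,a)$ for all $a\in X$ together with all six ordered triples $(x,y,z)$ obtained by ordering each triple $\{x,y,z\}$ of the STS; i.e. the entry in row $x$, column $y$ is $x$ if $x=y$, and otherwise is the third element of the unique STS triple containing $x$ and $y$. A Steiner latin square of order $n$ is one arising in this way from some STS of order $n$. *)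

(* Defs.v *)
From mathcomp Require Import all_boot all_order all_algebra.
Set Implicit Arguments. Unset Strict Implicit. Unset Printing Implicit Defensive.

Definition triple n := ('I_n * 'I_n * 'I_n)%type.
Definition row_of n (t : triple n) : 'I_n := t.1.1.
Definition col_of n (t : triple n) : 'I_n := t.1.2.
Definition sym_of n (t : triple n) : 'I_n := t.2.

Definition is_transversal n (A : {set triple n}) (T : {set triple n}) : bool :=
  [&& T \subset A, #|T| == n,
      [forall r : 'I_n, #|[set t in T | row_of t == r]| == 1],
      [forall c : 'I_n, #|[set t in T | col_of t == c]| == 1] &
      [forall t1 in T, forall t2 in T, (sym_of t1 == sym_of t2) ==> (t1 == t2)]].

Definition ntrans n (A : {set triple n}) : nat :=
  #|[set T : {set triple n} | is_transversal A T]|.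

Definition is_STS n (S : {set {set 'I_n}}) : Prop :=
  (forall B, B \in S -> #|B| = 3) /\
  (forall x y : 'I_n, x != y -> #|[set B in S | (x \in B) && (y \in B)]| = 1).

(* Steiner latin square of an STS: triples (a,a,a), plus all six orderings
   (x,y,z) of each block {x,y,z} of S. *)
Definition steiner_ls n (S : {set {set 'I_n}}) : {set triple n} :=
  [set t : triple n | ((row_of t == col_of t) && (col_of t == sym_of t))
                      || ([set row_of t; col_of t; sym_of t] \in S)].

Definition ceildiv (a b : nat) : nat := (a + b.-1) %/ b.

(* Main.v *)
Require Import Defs.
From mathcomp Require Import all_boot all_order all_algebra.
From mathcomp Require Import zify ring.
Set Implicit Arguments. Unset Strict Implicit. Unset Printing Implicit Defensive.
Import GRing.Theory Num.Theory.


Lemma card3_distinct (n : nat) (a b c : 'I_n) :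
  #|[set a; b; c]| = 3 -> [/\ a != b, b != c & a != c].
Proof.
move=> h.
have le2 : forall (x y : 'I_n), #|[set x; y]| <= 2 by move=> x y; rewrite cards2; case: (x != y).
split; apply/negP => /eqP e; subst.
- have : [set b; b; c] = [set b; c] by apply/setP => u; rewrite !inE; case: (u == b); case: (u == c).
  by move=> e; move: h; rewrite e => h; move: (le2 b c); rewrite h.
- have : [set a; c; c] = [set a; c] by apply/setP => u; rewrite !inE; case: (u == a); case: (u == c).
  by move=> e; move: h; rewrite e => h; move: (le2 a c); rewrite h.
- have : [set c; b; c] = [set c; b] by apply/setP => u; rewrite !inE; case: (u == c); case: (u == b).
  by move=> e; move: h; rewrite e => h; move: (le2 c b); rewrite h.
Qed.

Lemma card3_of_distinct (n : nat) (a b c : 'I_n) :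
  a != b -> b != c -> a != c -> #|[set a; b; c]| = 3.
Proof.
move=> ab bc ac.
have -> : [set a; b; c] = a |: [set b; c] by apply/setP => u; rewrite !inE; case: (u == a); case: (u == b); case: (u == c).
by rewrite cardsU1 cards2 bc !inE negb_or ab ac.
Qed.

Lemma offdiag_block n (S : {set {set 'I_n}}) (t : triple n) :
  is_STS S -> t \in steiner_ls S -> row_of t != col_of t ->
  [set row_of t; col_of t; sym_of t] \in S /\
  [/\ row_of t != col_of t, col_of t != sym_of t & row_of t != sym_of t].
Proof.
move=> [h3 _]; rewrite inE => /orP [/andP [/eqP -> _]|hS]; first by rewrite eqxx.
by move=> _; split => //; apply: card3_distinct; apply: h3.
Qed.

Lemma sts_exists n (S : {set {set 'I_n}}) (x y : 'I_n) :
  is_STS S -> x != y -> exists z : 'I_n, ((x, y), z) \in steiner_ls S.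
Proof.
move=> [h3 h1] xy.
have /eqP/cards1P [B eB] := h1 x y xy.
have : B \in [set B in S | (x \in B) && (y \in B)] by rewrite eB inE.
rewrite inE => /andP [BS /andP [xB yB]].
have : 0 < #|B :\: [set x; y]|.
  rewrite cardsD h3 //.
  have : #|B :&: [set x; y]| <= 2.
    by apply: leq_trans (subset_leq_card (subsetIr _ _)) _; rewrite cards2; case: (x != y).
  lia.
case/card_gt0P => z; rewrite !inE negb_or => /andP [/andP [zx zy] zB].
exists z; rewrite inE; apply/orP; right => /=.
have -> : [set x; y; z] = B.
  apply/eqP; rewrite eqEcard; apply/andP; split.
    by apply/subsetP => u; rewrite !inE => /orP [/orP [] |] /eqP ->.
  by rewrite h3 // card3_of_distinct // eq_sym.
done.
Qed.

Lemma sts_unique n (S : {set {set 'I_n}}) (x y y' z : 'I_n) :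
  is_STS S -> ((x, y), z) \in steiner_ls S -> ((x, y'), z) \in steiner_ls S ->
  x != y -> x != y' -> y = y'.
Proof.
move=> hS h1 h2 n1 n2.
have [B1 [d1 d2 d3]] := offdiag_block hS h1 n1.
have [B2 [e1 e2 e3]] := offdiag_block hS h2 n2.
simpl in *.
have /eqP/cards1P [B eB] := hS.2 x z d3.
have : [set x; y; z] \in [set B in S | (x \in B) && (z \in B)] by rewrite inE B1 !inE !eqxx /= orbT.
have : [set x; y'; z] \in [set B in S | (x \in B) && (z \in B)] by rewrite inE B2 !inE !eqxx /= orbT.
rewrite eB !inE => /eqP q1 /eqP q2.
have : y' \in [set x; y; z] by rewrite q2 -q1 !inE eqxx orbT.
rewrite !inE => /orP [/orP [/eqP e|/eqP e]|/eqP e].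
- by move: n2; rewrite e eqxx.
- by [].
- by move: e2; rewrite e eqxx.
Qed.

Definition rowsT n (T : {set triple n}) : {set 'I_n} := [set row_of t | t in T].
Definition ext n (S : {set {set 'I_n}}) (R : {set 'I_n}) (t : triple n) : bool :=
 [&& t \in steiner_ls S, row_of t != col_of t, row_of t \notin R, col_of t \notin R
   & sym_of t \notin R].
Definition V n (S : {set {set 'I_n}}) R := [set t | ext S R t].
Definition zf n (S : {set {set 'I_n}}) (x y : 'I_n) : 'I_n :=
  odflt x [pick z | ((x, y), z) \in steiner_ls S].

Lemma zfP n (S : {set {set 'I_n}}) x y :
  is_STS S -> x != y -> ((x, y), zf S x y) \in steiner_ls S.
Proof.
move=> hS xy; rewrite /zf; case: pickP => [z //|h].
by have [z hz] := sts_exists hS xy; move: (h z); rewrite hz.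
Qed.

Lemma card_by_row n (X : {set triple n}) :
  #|X| = \sum_(r : 'I_n) #|[set t in X | row_of t == r]|.
Proof.
rewrite -sum1_card (partition_big (@row_of n) predT) //=.
apply: eq_bigr => r _; rewrite -sum1_card; apply: eq_bigl => t; by rewrite inE.
Qed.

Lemma sum_sub_le (I : finType) (P : pred I) (F : I -> nat) :
  \sum_(i | P i) F i <= \sum_i F i.
Proof. by rewrite big_mkcond leq_sum // => i _; case: (P i). Qed.

Lemma V_count n (S : {set {set 'I_n}}) (R : {set 'I_n}) :
  is_STS S -> #|~: R| * (2 * #|~: R| - n.+1) <= #|V S R|.
Proof.
move=> hS; set s := #|~: R|.
have hRs : #|R| + s = n by rewrite /s cardsC card_ord.
rewrite card_by_row -sum_nat_const.
apply: leq_trans (sum_sub_le (mem (~: R)) _).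
apply: leq_sum => x; rewrite inE => xR.
set G := [set y | [&& y \notin R, y != x & zf S x y \notin R]].
set Bad := [set y | [&& y \notin R, y != x & zf S x y \in R]].
set Y := [set y | (y \notin R) && (y != x)].
have hY : #|Y| + 1 = s.
  rewrite /s (cardsD1 x (~: R)) inE xR addnC; congr (_ + _).
  by apply: eq_card => y; rewrite !inE andbC.
have hB : #|Bad| <= #|R|.
  rewrite -(@card_in_imset _ _ (zf S x)).
    apply: subset_leq_card; apply/subsetP => z /imsetP [y]; rewrite inE.
    by case/and3P => _ _ h ->.
  move=> y y'; rewrite !inE => /and3P [_ h1 _] /and3P [_ h2 _] e.
  have xy : x != y by rewrite eq_sym.
  have xy' : x != y' by rewrite eq_sym.
  have := zfP hS xy'; rewrite -e => h'.
  exact: (sts_unique hS (zfP hS xy) h' xy xy').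
have hG : #|Y| <= #|G| + #|Bad|.
  apply: leq_trans (_ : #|G :|: Bad| <= _); last by rewrite cardsU leq_subr.
  apply: subset_leq_card; apply/subsetP => y; rewrite !inE => /andP [h1 h2].
  by rewrite h1 h2 /=; case: (zf S x y \in R).
apply: leq_trans (_ : #|G| <= _); first by lia.
rewrite -(@card_in_imset _ _ (fun y => ((x, y), zf S x y) : triple n)).
  apply: subset_leq_card; apply/subsetP => t /imsetP [y]; rewrite inE.
  case/and3P => h1 h2 h3 ->; have xy : x != y by rewrite eq_sym.
  by rewrite !inE /ext /= eqxx andbT h1 h3 xR zfP // xy.
by move=> y y' _ _ [].
Qed.

Definition rot n (t : triple n) : triple n := ((col_of t, sym_of t), row_of t).
Definition cyc n (t : triple n) : {set triple n} := [set t; rot t; rot (rot t)].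

Lemma cycP n (t u : triple n) :
  u \in cyc t -> [\/ u = t, u = rot t | u = rot (rot t)].
Proof. by rewrite !inE => /orP [/orP [/eqP->|/eqP->]|/eqP->]; [constructor 1|constructor 2|constructor 3]. Qed.

Lemma card_cyc n (t : triple n) : #|cyc t| <= 3.
Proof. by rewrite /cyc !cardsU !cards1; lia. Qed.

Lemma set3C n (x y z : 'I_n) : [set y; z; x] = [set x; y; z].
Proof. by apply/setP => u; rewrite !inE; case: (u == x); case: (u == y); case: (u == z). Qed.

Lemma rot_in n (S : {set {set 'I_n}}) t : t \in steiner_ls S -> rot t \in steiner_ls S.
Proof.
move: t => [[x y] z]; rewrite !inE /row_of /col_of /sym_of /= (set3C x y z).
case/orP => [|->]; last by rewrite orbT.
by case/andP => /eqP -> /eqP ->; rewrite !eqxx.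
Qed.

Lemma imset_cyc n (g : triple n -> 'I_n) t :
  [set g u | u in cyc t] = [set g t; g (rot t); g (rot (rot t))].
Proof. by rewrite /cyc !imsetU !imset_set1. Qed.

Lemma inj_union (n : nat) (T : finType) (g : T -> 'I_n) (A C : {set T}) (R : {set 'I_n}) :
  {in A &, injective g} -> {in C &, injective g} ->
  (forall u, u \in A -> g u \in R) -> (forall u, u \in C -> g u \notin R) ->
  {in A :|: C &, injective g}.
Proof.
move=> iA iC hA hC u1 u2 /setUP [a1|c1] /setUP [a2|c2] e.
- exact: iA.
- by move: (hC _ c2); rewrite -e hA.
- by move: (hC _ c1); rewrite e hA.
- exact: iC.
Qed.

Lemma cyc_inj n (g : triple n -> 'I_n) t :
  g t != g (rot t) -> g (rot t) != g (rot (rot t)) -> g t != g (rot (rot t)) ->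
  {in cyc t &, injective g}.
Proof.
move=> h1 h2 h3 u1 u2 /cycP c1 /cycP c2 e.
case: c1 e => -> e; case: c2 e => -> e //;
 first [by rewrite e eqxx in h1 | by rewrite e eqxx in h2 | by rewrite e eqxx in h3
      | by rewrite -e eqxx in h1 | by rewrite -e eqxx in h2 | by rewrite -e eqxx in h3].
Qed.

Record Inv n (S : {set {set 'I_n}}) (T : {set triple n}) : Prop := {
  Isub : T \subset steiner_ls S;
  Ioff : {in T, forall t, row_of t != col_of t};
  Irow : {in T &, injective (@row_of n)};
  Icol : {in T &, injective (@col_of n)};
  Isym : {in T &, injective (@sym_of n)};
  Icols : [set col_of t | t in T] = rowsT T;
  Isyms : [set sym_of t | t in T] = rowsT T }.

Fixpoint F n (S : {set {set 'I_n}}) (p : nat) : {set {set triple n}} :=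
  match p with
  | 0 => [set set0]
  | p.+1 => [set U | [exists T in F S p, exists t, ext S (rowsT T) t && (U == T :|: cyc t)]]
  end.

Lemma ext_notin n (S : {set {set 'I_n}}) T t u :
  Inv S T -> ext S (rowsT T) t -> u \in T -> u \notin cyc t.
Proof.
move=> hI /and5P [_ _ hx hy hz] uT; apply/negP => /cycP.
have hr : row_of u \in rowsT T by apply: imset_f.
by case => e; subst u; move: hr; rewrite /rot /= ?(negbTE hx) ?(negbTE hy) ?(negbTE hz).
Qed.

Lemma Inv_step n (S : {set {set 'I_n}}) T t :
  is_STS S -> Inv S T -> ext S (rowsT T) t -> Inv S (T :|: cyc t).
Proof.
move=> hS hI he; have := he; case/and5P => tA toff hx hy hz.
have [_ [d1 d2 d3]] := offdiag_block hS tA toff.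
have hcolR : forall u, u \in T -> col_of u \in rowsT T.
  by move=> u uT; rewrite -(Icols hI); apply: imset_f.
have hsymR : forall u, u \in T -> sym_of u \in rowsT T.
  by move=> u uT; rewrite -(Isyms hI); apply: imset_f.
have hrowR : forall u, u \in T -> row_of u \in rowsT T by move=> u uT; apply: imset_f.
have rx : forall u, u \in cyc t -> [/\ row_of u \notin rowsT T, col_of u \notin rowsT T & sym_of u \notin rowsT T].
  by move=> u /cycP [] ->; rewrite /rot /=; split.
have hrows : rowsT (T :|: cyc t) = rowsT T :|: [set row_of t; col_of t; sym_of t].
  by rewrite /rowsT imsetU imset_cyc.
split.
- rewrite subUset (Isub hI) /=; apply/subsetP => u /cycP [] ->; first by [].
  + exact: rot_in.
  + by do 2 apply: rot_in.
- move=> u /setUP [uT|/cycP [] ->]; first exact: (Ioff hI).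
  + by [].
  + by [].
  + by rewrite /rot /= eq_sym.
- apply: (inj_union (Irow hI)); first by apply: cyc_inj; rewrite /rot /= // eq_sym.
  + exact: hrowR.
  + by move=> u /rx [].
- apply: (inj_union (Icol hI)); first by apply: cyc_inj; rewrite /rot /= // eq_sym.
  + exact: hcolR.
  + by move=> u /rx [].
- apply: (inj_union (Isym hI)); first by apply: cyc_inj; rewrite /rot /= // eq_sym.
  + exact: hsymR.
  + by move=> u /rx [].
- by rewrite hrows imsetU (Icols hI) imset_cyc /rot /= set3C.
- by rewrite hrows imsetU (Isyms hI) imset_cyc /rot /= -set3C.
Qed.

Lemma F_inv n (S : {set {set 'I_n}}) p T :
  is_STS S -> T \in F S p -> Inv S T /\ #|T| <= 3 * p.
Proof.
move=> hS; elim: p T => [|p IH] T /=.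
  rewrite inE => /eqP ->; split; last by rewrite cards0.
  split; rewrite /rowsT ?imset0 ?sub0set //; by move=> ?; rewrite inE.
rewrite inE => /existsP [T0] /andP [T0F /existsP [t /andP [he /eqP ->]]].
have [hI hc] := IH _ T0F; split; first exact: Inv_step.
by rewrite cardsU; have := card_cyc t; lia.
Qed.

Lemma F_step n (S : {set {set 'I_n}}) p T t :
  T \in F S p -> ext S (rowsT T) t -> T :|: cyc t \in F S p.+1.
Proof.
move=> TF he; rewrite /= inE; apply/existsP; exists T; rewrite TF /=.
by apply/existsP; exists t; rewrite he eqxx.
Qed.

Lemma sum_ind_card (I : finType) (A : {set I}) (c : nat) :
  \sum_i ((i \in A) * c) = #|A| * c.
Proof.
rewrite -sum_nat_const [RHS]big_mkcond; apply: eq_bigr => i _; by case: (i \in A); rewrite ?mul1n.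
Qed.

Lemma sum_pred1_mul (I : finType) (X : I) (c : nat) :
  \sum_i ((i == X) * c) = c.
Proof.
by rewrite (bigD1 X) //= eqxx mul1n big1 ?addn0 // => i /negbTE ->.
Qed.

Lemma dc n (S : {set {set 'I_n}}) p :
  is_STS S -> \sum_(T in F S p) #|V S (rowsT T)| <= 3 * p.+1 * #|F S p.+1|.
Proof.
move=> hS.
pose g (T : {set triple n}) (t : triple n) (U : {set triple n}) : nat :=
  [&& T \in F S p, t \in V S (rowsT T), U \in F S p.+1 & U == T :|: cyc t].
have step1 : \sum_(T in F S p) #|V S (rowsT T)| <= \sum_T \sum_t \sum_U g T t U.
  apply: leq_trans (sum_sub_le _ _); apply: leq_sum => T TF.
  rewrite -sum1_card; apply: leq_trans (sum_sub_le _ _); apply: leq_sum => t tV.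
  have he : ext S (rowsT T) t by move: tV; rewrite inE.
  rewrite (bigD1 (T :|: cyc t)) //= /g TF tV F_step // eqxx /=.
  exact: leq_addr.
apply: leq_trans step1 _.
under eq_bigr => T _ do rewrite exchange_big.
rewrite exchange_big /=.
rewrite mulnC -sum_ind_card; apply: leq_sum => U _.
rewrite exchange_big /=.
apply: leq_trans (_ : \sum_t ((t \in U) && (U \in F S p.+1) : nat) <= _).
  apply: leq_sum => t _.
  rewrite -(sum_pred1_mul (U :\: cyc t) ((t \in U) && (U \in F S p.+1))).
  apply: leq_sum => T _; rewrite /g.
  case TF: (T \in F S p) => //; case tV: (t \in V S (rowsT T)) => //.
  case UF: (U \in F S p.+1) => //; case: eqP => //= eU.
  have he : ext S (rowsT T) t by move: tV; rewrite inE.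
  have [hI _] := F_inv hS TF.
  have -> : T == U :\: cyc t.
    apply/eqP/setP => u; rewrite eU in_setD in_setU.
    case uT: (u \in T); first by rewrite (negbTE (ext_notin hI he uT)).
    by case: (u \in cyc t).
  by rewrite eU !inE eqxx orbT.
case UF: (U \in F S p.+1); last by rewrite big1 // => t _; rewrite andbF.
have [_ hc] := F_inv hS UF.
rewrite mul1n; apply: leq_trans hc.
rewrite -sum1_card [X in _ <= X]big_mkcond /=.
by apply: leq_sum => t _; case: (t \in U).
Qed.

Definition dg n (a : 'I_n) : triple n := ((a, a), a).
Definition D n (T : {set triple n}) : {set triple n} := [set dg a | a in ~: rowsT T].

Lemma count1 n (f : triple n -> 'I_n) (T : {set triple n}) :
  {in T &, injective f} -> [set f t | t in T] = rowsT T -> (forall a, f (dg a) = a) ->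
  forall r, #|[set t in T :|: D T | f t == r]| = 1.
Proof.
move=> finj fim fd r; apply/eqP/cards1P.
case rR: (r \in rowsT T).
- move: rR; rewrite -fim => /imsetP [t0 t0T e]; exists t0.
  apply/setP => t; rewrite !inE; apply/idP/idP.
  + case/andP => /orP [tT|/imsetP [a aR et]] /eqP h.
    * by apply/eqP; apply: finj => //; rewrite h e.
    * subst t; move: aR; rewrite fd in h.
      by rewrite inE h e -fim imset_f.
  + by move/eqP => ->; rewrite t0T e eqxx.
- exists (dg r); apply/setP => t; rewrite !inE; apply/idP/idP.
  + case/andP => /orP [tT|/imsetP [a aR et]] /eqP h.
    * by move: rR; rewrite -fim -h imset_f.
    * by subst t; rewrite fd in h; rewrite h.
  + move/eqP => ->; rewrite fd eqxx andbT; apply/orP; right.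
    by apply: imset_f; rewrite inE rR.
Qed.

Lemma transv n (S : {set {set 'I_n}}) T :
  Inv S T -> Defs.is_transversal (steiner_ls S) (T :|: D T).
Proof.
move=> hI.
have hr := count1 (Irow hI) erefl (fun a => erefl).
have hc := count1 (Icol hI) (Icols hI) (fun a => erefl).
apply/and5P; split.
- rewrite subUset (Isub hI) /=; apply/subsetP => t /imsetP [a _ ->].
  by rewrite inE /dg /row_of /col_of /sym_of /= !eqxx.
- by rewrite card_by_row (eq_bigr (fun _ => 1)) ?sum1_card ?card_ord // => r _; rewrite hr.
- by apply/forallP => r; rewrite hr.
- by apply/forallP => r; rewrite hc.
- apply/forall_inP => t1 t1X; apply/forall_inP => t2 t2X; apply/implyP => /eqP e.
  apply/eqP; move: e; apply: (inj_union (R:=rowsT T) (Isym hI) _ _ _ t1X t2X).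
  + by move=> u1 u2 /imsetP [a _ ->] /imsetP [b _ ->]; rewrite /dg /sym_of /= => ->.
  + by move=> u uT; rewrite -(Isyms hI) imset_f.
  + by move=> u /imsetP [a]; rewrite inE => aR ->.
Qed.

Lemma recoverT n (S : {set {set 'I_n}}) T :
  Inv S T -> T = [set t in T :|: D T | row_of t != col_of t].
Proof.
move=> hI; apply/setP => t; rewrite !inE.
case tT: (t \in T) => /=; first by rewrite (Ioff hI).
by case: (boolP (t \in D T)) => [/imsetP [a _ ->]|_] //=; rewrite /dg /row_of /col_of /= eqxx.
Qed.

Lemma ntrans_ge n (S : {set {set 'I_n}}) p :
  is_STS S -> #|F S p| <= ntrans (steiner_ls S).
Proof.
move=> hS; rewrite /ntrans.
rewrite -(@card_in_imset _ _ (fun T => T :|: D T) (mem (F S p))).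
  apply: subset_leq_card; apply/subsetP => X /imsetP [T TF ->].
  by rewrite inE; apply: transv; case: (F_inv hS TF).
move=> T1 T2 h1 h2 e.
have [hI1 _] := F_inv hS h1; have [hI2 _] := F_inv hS h2.
by rewrite (recoverT hI1) (recoverT hI2) e.
Qed.

Lemma V_bound n (S : {set {set 'I_n}}) p T :
  is_STS S -> (n %% 6 = 1 \/ n %% 6 = 3) -> p < n %/ 6 -> T \in F S p ->
  18 * (n %/ 3 - p) * (n %/ 6 - p) <= #|V S (rowsT T)|.
Proof.
move=> hS hmod hp TF.
have [_ hc] := F_inv hS TF.
have hR : #|rowsT T| <= 3 * p := leq_trans (leq_imset_card _ _) hc.
have hs : #|rowsT T| + #|~: rowsT T| = n by rewrite cardsC card_ord.
apply: leq_trans (V_count (rowsT T) hS).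
set s := #|~: rowsT T|.
have h1 : 3 * (n %/ 3 - p) <= s by lia.
have h2 : 6 * (n %/ 6 - p) <= 2 * s - n.+1 by lia.
apply: leq_trans (leq_mul h1 h2).
by rewrite leq_eqVlt; apply/orP; left; apply/eqP; ring.
Qed.

Lemma main_count n (S : {set {set 'I_n}}) :
  is_STS S -> (n %% 6 = 1 \/ n %% 6 = 3) -> forall p, p <= n %/ 6 ->
  18 ^ p * (n %/ 3) ^_ p * (n %/ 6) ^_ p <= 3 ^ p * p`! * #|F S p|.
Proof.
move=> hS hmod; elim=> [|p IH] hp.
  by rewrite /= cards1.
have hp' : p < n %/ 6 by [].
set c := 18 * (n %/ 3 - p) * (n %/ 6 - p).
have H : #|F S p| * c <= 3 * p.+1 * #|F S p.+1|.
  apply: leq_trans (dc p hS).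
  rewrite -sum_nat_const; apply: leq_sum => T TF; exact: V_bound.
have A := leq_mul (IH (ltnW hp)) (leqnn c).
have B := leq_mul (leqnn (3 ^ p * p`!)) H.
have e1 : 18 ^ p.+1 * (n %/ 3) ^_ p.+1 * (n %/ 6) ^_ p.+1 =
   18 ^ p * (n %/ 3) ^_ p * (n %/ 6) ^_ p * c.
  by rewrite !ffactnSr expnS /c; ring.
have e2 : 3 ^ p.+1 * p.+1`! * #|F S p.+1| = 3 ^ p * p`! * (3 * p.+1 * #|F S p.+1|).
  by rewrite expnS factS; ring.
rewrite e1 e2; apply: leq_trans A _; apply: leq_trans _ B.
by rewrite leq_eqVlt; apply/orP; left; apply/eqP; ring.
Qed.

Theorem theorem1 (n : nat) (S : {set {set 'I_n}}) :
  3 <= n -> (n %% 6 = 1 \/ n %% 6 = 3) -> is_STS S ->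
  let k := ceildiv (n - 1) 6 in
  ((6 ^ (k - 1) * (n %/ 3)`!)%:R / (k`! * k)%:R <= (ntrans (steiner_ls S))%:R :> rat)%R.
Proof.
move=> h3 hmod hS; cbv zeta; set k := ceildiv (n - 1) 6.
set q := n %/ 3; set m := n %/ 6.
have hk : k = q - m by rewrite /k /ceildiv /q /m /=; lia.
have hk1 : 1 <= k by rewrite hk /q /m; lia.
have hmq : m <= q by rewrite /q /m; lia.
have hkm : k - 1 <= m by rewrite hk /q /m; lia.
have H := main_count hS hmod (leqnn m); have e18 : 18 ^ m = 6 ^ m * 3 ^ m by rewrite -expnMn.
rewrite -/q -/m ffactnn e18 in H.
have H2 : 6 ^ m * q ^_ m <= #|F S m|.
  have pos : 0 < 3 ^ m * m`! by rewrite muln_gt0 expn_gt0 fact_gt0.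
  rewrite -(leq_pmul2l pos); apply: leq_trans _ H.
  by rewrite leq_eqVlt; apply/orP; left; apply/eqP; ring.
have N := ntrans_ge m hS.
have hq : q`! = q ^_ m * k`! by rewrite -(ffact_fact hmq) hk.
have E6 : 6 ^ (k - 1) <= 6 ^ m by rewrite leq_exp2l.
have main : 6 ^ (k - 1) * q`! <= ntrans (steiner_ls S) * (k`! * k).
  rewrite hq mulnA; apply: leq_trans (_ : 6 ^ m * q ^_ m * k`! <= _).
    by apply: leq_mul => //; apply: leq_mul.
  apply: leq_trans (_ : ntrans (steiner_ls S) * k`! <= _).
    by rewrite mulnC [X in _ <= X]mulnC leq_mul2l (leq_trans H2 N) orbT.
  by rewrite mulnA leq_pmulr.
have dpos : (0 < (k`! * k)%:R :> rat)%R by rewrite ltr0n muln_gt0 fact_gt0.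
by rewrite ler_pdivrMr // -natrM ler_nat.
Qed.
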